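(* There exist context-free languages $L_1$ and $L_2$ such that $L_1 \stackrel{\rm pgi}{\leftarrow} L_1$ and $L_2 \stackrel{\rm sgi}{\leftarrow} L_2$ are not context-free.
   Context: Prefix-guided insertion: $x \stackrel{\rm pgi}{\leftarrow} y = \{ x_1 y_1 y_2 x_2 \mid x = x_1 y_1 x_2,\ y = y_1 y_2,\ y_1 \neq \varepsilon \}$. Suffix-guided insertion: $x \stackrel{\rm sgi}{\leftarrow} y = \{ x_1 y_1 y_2 x_2 \mid x = x_1 y_2 x_2,\ y = y_1 y_2,\ y_2 \neq \varepsilon \}$. Both are extended to languages by union over all pairs of strings. *)

(* Defs.v *)
From mathcomp Require Import all_boot.
Set Implicit Arguments. Unset Strict Implicit. Unset Printing Implicit Defensive.

Definition lang (Sigma : Type) := seq Sigma -> Prop.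

Record cfg (Sigma : finType) (N : finType) := CFG {
  cfg_start : N;
  cfg_rules : seq (N * seq (N + Sigma))
}.

Inductive cfg_step (Sigma : finType) (N : finType) (G : cfg Sigma N) :
    seq (N + Sigma) -> seq (N + Sigma) -> Prop :=
| CfgStep (u v alpha : seq (N + Sigma)) (A : N) :
    (A, alpha) \in cfg_rules G ->
    cfg_step G (u ++ inl A :: v) (u ++ alpha ++ v).

Inductive cfg_derives (Sigma : finType) (N : finType) (G : cfg Sigma N) :
    seq (N + Sigma) -> seq (N + Sigma) -> Prop :=
| CfgRefl s : cfg_derives G s s
| CfgTrans s t r : cfg_step G s t -> cfg_derives G t r -> cfg_derives G s r.

Definition cfg_lang (Sigma : finType) (N : finType) (G : cfg Sigma N) : lang Sigma :=
  fun w => cfg_derives G [:: inl (cfg_start G)] (map inr w).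

Definition context_free (Sigma : finType) (L : lang Sigma) : Prop :=
  exists (N : finType) (G : cfg Sigma N), forall w, L w <-> cfg_lang G w.

Definition pgi_word (Sigma : Type) (x y w : seq Sigma) : Prop :=
  exists x1 y1 x2 y2,
    [/\ x = x1 ++ y1 ++ x2, y = y1 ++ y2, y1 <> [::] & w = x1 ++ y1 ++ y2 ++ x2].

Definition sgi_word (Sigma : Type) (x y w : seq Sigma) : Prop :=
  exists x1 y1 x2 y2,
    [/\ x = x1 ++ y2 ++ x2, y = y1 ++ y2, y2 <> [::] & w = x1 ++ y1 ++ y2 ++ x2].

Definition pgi (Sigma : Type) (L1 L2 : lang Sigma) : lang Sigma :=
  fun w => exists x y, [/\ L1 x, L2 y & pgi_word x y w].

Definition sgi (Sigma : Type) (L1 L2 : lang Sigma) : lang Sigma :=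
  fun w => exists x y, [/\ L1 x, L2 y & sgi_word x y w].

(* Main.v *)
Require Import Defs.
From mathcomp Require Import all_boot zify.
Set Implicit Arguments. Unset Strict Implicit. Unset Printing Implicit Defensive.

Inductive T (Sigma N : finType) (G : cfg Sigma N) : N + Sigma -> seq Sigma -> Prop :=
| Tleaf a : T G (inr a) [:: a]
| Tnode A alpha w : (A, alpha) \in cfg_rules G -> Ts G alpha w -> T G (inl A) w
with Ts (Sigma N : finType) (G : cfg Sigma N) : seq (N + Sigma) -> seq Sigma -> Prop :=
| Tsnil : Ts G [::] [::]
| Tscons x s w1 w2 : T G x w1 -> Ts G s w2 -> Ts G (x :: s) (w1 ++ w2).

Scheme T_mut := Induction for T Sort Prop with Ts_mut := Induction for Ts Sort Prop.

Lemma Ts_cat (Sigma N : finType) (G : cfg Sigma N) s1 s2 w1 w2 :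
  Ts G s1 w1 -> Ts G s2 w2 -> Ts G (s1 ++ s2) (w1 ++ w2).
Proof.
move=> H; elim: H w2 => [|x s u1 u2 Hx Hs IH] w2 H2 //=.
rewrite -catA; constructor => //; exact: IH.
Qed.

Lemma Ts_split (Sigma N : finType) (G : cfg Sigma N) s1 s2 w :
  Ts G (s1 ++ s2) w -> exists w1 w2, [/\ w = w1 ++ w2, Ts G s1 w1 & Ts G s2 w2].
Proof.
elim: s1 w => [|x s1 IH] w /=; first by move=> H; exists [::], w; split => //; constructor.
move=> H; inversion H as [|x0 s0 v1 v2 Hx Hs E1 E2]; subst.
have [u1 [u2 [-> Hu1 Hu2]]] := IH _ Hs.
exists (v1 ++ u1), u2; split; [by rewrite catA | by constructor | by []].
Qed.

Lemma derives_trans (Sigma N : finType) (G : cfg Sigma N) s t r :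
  cfg_derives G s t -> cfg_derives G t r -> cfg_derives G s r.
Proof.
elim=> [//|s0 t0 r0 Hst _ IH] Hr; apply: CfgTrans Hst _; exact: IH.
Qed.

Lemma derives_ctx (Sigma N : finType) (G : cfg Sigma N) s t u v :
  cfg_derives G s t -> cfg_derives G (u ++ s ++ v) (u ++ t ++ v).
Proof.
elim=> [s0|s0 t0 r0 Hst _ IH]; first by constructor.
apply: CfgTrans IH; case: Hst => p q alpha A HA.
have := CfgStep (G:=G) (u ++ p) (q ++ v) HA.
by rewrite -!catA /=.
Qed.

Lemma derives_cat (Sigma N : finType) (G : cfg Sigma N) s1 t1 s2 t2 :
  cfg_derives G s1 t1 -> cfg_derives G s2 t2 -> cfg_derives G (s1 ++ s2) (t1 ++ t2).
Proof.
move=> H1 H2; apply: (@derives_trans _ _ _ _ (t1 ++ s2)).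
  by have := derives_ctx [::] s2 H1.
by have := derives_ctx t1 [::] H2; rewrite !cats0.
Qed.

Lemma T_derives (Sigma N : finType) (G : cfg Sigma N) x w :
  T G x w -> cfg_derives G [:: x] (map inr w).
Proof.
move=> H.
refine (@T_mut _ _ G (fun x w _ => cfg_derives G [:: x] (map inr w))
             (fun s w _ => cfg_derives G s (map inr w)) _ _ _ _ x w H).
- by move=> a; constructor.
- move=> A alpha w0 HA _ IH; apply: CfgTrans IH.
  by have := CfgStep (G:=G) [::] [::] HA; rewrite /= cats0.
- by constructor.
- move=> x0 s w1 w2 _ IH1 _ IH2; rewrite map_cat.
  by have := derives_cat IH1 IH2.
Qed.

Lemma Ts_map (Sigma N : finType) (G : cfg Sigma N) w : Ts G (map inr w) w.
Proof.
elim: w => [|a w IH] /=; first by constructor.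
by have := Tscons (Tleaf G a) IH.
Qed.

Lemma derives_Ts (Sigma N : finType) (G : cfg Sigma N) s w :
  cfg_derives G s (map inr w) -> Ts G s w.
Proof.
move E: (map inr w) => t H; elim: H w E => [s0|s0 t0 r0 Hst _ IH] w E.
  by subst; apply: Ts_map.
have {IH} H := IH _ E.
case: Hst H => p q alpha A HA H.
have [w1 [w23 [-> H1 H23]]] := Ts_split H.
have [w2 [w3 [-> H2 H3]]] := Ts_split H23.
apply: Ts_cat => //.
constructor => //; exact: Tnode HA H2.
Qed.

Lemma lang_T (Sigma N : finType) (G : cfg Sigma N) w :
  cfg_lang G w <-> T G (inl (cfg_start G)) w.
Proof.
split.
  move/derives_Ts=> H; inversion H; subst; inversion H4; subst.
  by rewrite cats0.
by move/T_derives.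
Qed.

Definition Kc (Sigma N : finType) (G : cfg Sigma N) :=
  (foldr (fun r m => maxn (size r.2) m) 0 (cfg_rules G)).+1.

Lemma rule_size (Sigma N : finType) (G : cfg Sigma N) A alpha :
  (A, alpha) \in cfg_rules G -> size alpha < Kc G.
Proof.
rewrite /Kc; elim: (cfg_rules G) => [|r rs IH] //=.
rewrite inE => /orP[/eqP <-|/IH] /=; lia.
Qed.

Definition Cx (Sigma N : finType) (G : cfg Sigma N) A (u v : seq Sigma) B :=
  forall w, T G (inl B) w -> T G (inl A) (u ++ w ++ v).

Lemma Cx_refl (Sigma N : finType) (G : cfg Sigma N) A : Cx G A [::] [::] A.
Proof. by move=> w; rewrite cats0. Qed.

Lemma Cx_comp (Sigma N : finType) (G : cfg Sigma N) A p q B u v D :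
  Cx G A p q B -> Cx G B u v D -> Cx G A (p ++ u) (v ++ q) D.
Proof. by move=> H1 H2 w Hw; have := H1 _ (H2 _ Hw); rewrite -!catA. Qed.

Definition Good (Sigma N : finType) (G : cfg Sigma N) A w :=
  exists u x y z v B, [/\ w = u ++ x ++ y ++ z ++ v, Cx G A u v B, Cx G B x z B,
     x ++ z <> [::] & T G (inl B) y].

Lemma Good_comp (Sigma N : finType) (G : cfg Sigma N) A p q B w :
  Cx G A p q B -> Good G B w -> Good G A (p ++ w ++ q).
Proof.
move=> H [u [x [y [z [v [D [-> H1 H2 H3 H4]]]]]]].
exists (p ++ u), x, y, z, (v ++ q), D; split => //; last exact: Cx_comp H1.
by rewrite -!catA.
Qed.

Definition PA (Sigma N : finType) (G : cfg Sigma N) A w :=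
  forall j, (Kc G) ^ j < size w -> Good G A w \/
   exists X : {set N}, j < #|X| /\ forall D, D \in X ->
     exists u v w', [/\ w = u ++ w' ++ v, Cx G A u v D & T G (inl D) w'].

Definition Pdef (Sigma N : finType) (G : cfg Sigma N) (x : N + Sigma) w :=
  match x with inl A => PA G A w | inr _ => True end.

Definition Qdef (Sigma N : finType) (G : cfg Sigma N) s (w : seq Sigma) :=
  w = [::] \/ exists l x r wl wx wr, [/\ s = l ++ x :: r, w = wl ++ wx ++ wr,
     Ts G l wl, T G x wx & Ts G r wr] /\ Pdef G x wx /\ size w <= size s * size wx.

Lemma catnil (T0 : Type) (s1 s2 : seq T0) : s1 ++ s2 = [::] -> s1 = [::] /\ s2 = [::].
Proof. by case: s1 => //; case: s2. Qed.

Lemma T_inr (Sigma N : finType) (G : cfg Sigma N) a w : T G (inr a) w -> w = [:: a].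
Proof. by move=> H; inversion H. Qed.

Lemma main_ind (Sigma N : finType) (G : cfg Sigma N) x w : T G x w -> Pdef G x w.
Proof.
move=> H.
refine (@T_mut _ _ G (fun x w _ => Pdef G x w) (fun s w _ => Qdef G s w) _ _ _ _ x w H).
- by [].
- move=> A alpha w0 HA Hts [->|[l [y [r [wl [wy [wr [[Ea Ew Hl Hy Hr] [Py Hsz]]]]]]]]].
    by move=> j /=; rewrite ltn0.
  have K1 : 0 < Kc G by [].
  have Ka := rule_size HA.
  move=> [|j] Hj.
    right; exists [set A]; rewrite cards1; split => // D; rewrite inE => /eqP ->.
    exists [::], [::], w0; split => //; [by rewrite cats0 | exact: Cx_refl | exact: Tnode HA Hts].
  case: y Ea Hy Py Hsz => [B|a] Ea Hy Py Hsz; last first.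
    move: Hsz; rewrite (T_inr Hy) /= muln1 => Hsz.
    have : Kc G <= Kc G ^ j.+1 by rewrite expnS leq_pmulr // expn_gt0 K1.
    by move=> HK; have := ltn_trans (leq_trans (leq_ltn_trans Hsz Ka) HK) Hj; rewrite ltnn.
  have CAB : Cx G A wl wr B.
    move=> w' Hw'; apply: Tnode HA _; rewrite Ea; apply: Ts_cat => //.
    by constructor.
  have Hwl : size w0 <= Kc G * size wy.
    apply: leq_trans Hsz _; rewrite leq_mul2r; apply/orP; right; exact: ltnW.
  case E: (wl ++ wr == [::]).
    move/eqP: E => /catnil [El Er]; subst wl wr.
    have Ew' : w0 = wy by rewrite Ew cats0.
    case: (Py j.+1); first by rewrite -Ew'.
      by move=> Hg; left; have := Good_comp CAB Hg; rewrite /= cats0 -Ew'.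
    move=> [X [HX HD]]; right; exists X; split => // D /HD [u [v [w' [Eu C1 T1]]]].
    exists u, v, w'; split => //; first by rewrite Ew'.
    by have := Cx_comp CAB C1; rewrite /= cats0.
  have Hj' : Kc G ^ j < size wy.
    rewrite -(ltn_pmul2l K1) -expnS; exact: leq_trans Hj Hwl.
  case: (Py j Hj').
    by move=> Hg; left; have := Good_comp CAB Hg; rewrite -Ew.
  move=> [X [HX HD]].
  case AX: (A \in X).
    have [u [v [w' [Eu C1 T1]]]] := HD _ AX.
    left; exists [::], (wl ++ u), w', (v ++ wr), [::], A; split.
    - by rewrite Ew Eu /= cats0 -!catA.
    - exact: Cx_refl.
    - exact: Cx_comp CAB C1.
    - move=> /catnil [/catnil [El _] /catnil [_ Er]]; by rewrite El Er in E.
    - exact: T1.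
  right; exists (A |: X); split.
    by rewrite cardsU1 AX.
  move=> D; rewrite in_setU1.
  case/orP=> [/eqP ->|/HD [u [v [w' [Eu C1 T1]]]]].
    exists [::], [::], w0; split => //; [by rewrite cats0 | exact: Cx_refl | exact: Tnode HA Hts].
  exists (wl ++ u), (v ++ wr), w'; split; last exact: T1.
    by rewrite Ew Eu -!catA.
  exact: Cx_comp CAB C1.
- by left.
- move=> y s w1 w2 Hy Py Hs [E2|[l [z [r [wl [wz [wr [[Ea Ew Hl Hz Hr] [Pz Hsz]]]]]]]]].
    subst w2; right; exists [::], y, s, [::], w1, [::]; split; [split|split] => //; rewrite ?cats0 //.
    + by constructor.
    + by change (size w1 <= (size s).+1 * size w1); rewrite mulSn leq_addr.
  case: (leqP (size (w1 ++ w2)) ((size s).+1 * size w1)) => Hc.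
    right; exists [::], y, s, [::], w1, w2; split; [split|split] => //; by constructor.
  right; exists (y :: l), z, r, (w1 ++ wl), wz, wr; split; [split|split] => //.
  + by rewrite Ea.
  + by rewrite Ew !catA.
  + by constructor.
  + rewrite /=; move: Hc Hsz; rewrite size_cat /= => Hc Hsz.
    case: (leqP (size w1) (size wz)) => H1; first by nia.
    nia.
Qed.

Lemma pumping (Sigma N : finType) (G : cfg Sigma N) w :
  T G (inl (cfg_start G)) w -> (Kc G) ^ #|N| < size w ->
  exists u x y z v, [/\ w = u ++ x ++ y ++ z ++ v, x ++ z <> [::],
    T G (inl (cfg_start G)) (u ++ y ++ v) &
    T G (inl (cfg_start G)) (u ++ x ++ x ++ y ++ z ++ z ++ v)].
Proof.
move=> HT Hs; have := main_ind HT; rewrite /Pdef => /(_ _ Hs).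
case=> [[u [x [y [z [v [B [Ew C1 C2 Hxz Hy]]]]]]]|[X [HX _]]]; last first.
  by have := max_card X; rewrite leqNgt HX.
exists u, x, y, z, v; split => //.
  exact: C1.
have := C1 _ (C2 _ (C2 _ Hy)); by rewrite -!catA.
Qed.

Notation Sg := (option (bool * bool)).
Definition la : Sg := Some (false, false).
Definition hs : Sg := None.
Definition lb : Sg := Some (false, true).
Definition dl : Sg := Some (true, false).
Definition lc : Sg := Some (true, true).

Definition rk (s : Sg) : nat :=
  match s with None => 1 | Some (false, false) => 0 | Some (false, true) => 2
  | Some (true, false) => 3 | Some (true, true) => 4 end.

Lemma rk_inj : injective rk.
Proof. by move=> [[[] []]|] [[[] []]|]. Qed.

Definition r (s t : Sg) := rk s <= rk t.

Definition target n : seq Sg := nseq n la ++ hs :: nseq n lb ++ dl :: nseq n lc.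

Definition cnt (s : Sg) (w : seq Sg) : nat := count_mem s w.
Arguments cnt : simpl never.
Lemma cnt_cat s u v : cnt s (u ++ v) = cnt s u + cnt s v.
Proof. exact: count_cat. Qed.
Lemma cnt_cons s h t : cnt s (h :: t) = (h == s) + cnt s t.
Proof. by []. Qed.
Lemma cnt_nil s : cnt s [::] = 0.
Proof. by []. Qed.
Lemma cnt_nseq s m t : cnt s (nseq m t) = (t == s) * m.
Proof. exact: count_nseq. Qed.

Lemma pw_nseq n s t : r s s -> all (r s) t -> pairwise r t -> pairwise r (nseq n s ++ t).
Proof.
move=> Hs Ht Hp; elim: n => //= n IH; rewrite IH andbT all_cat Ht andbT.
by rewrite all_nseq Hs orbT.
Qed.

Lemma target_sorted n : pairwise r (target n).
Proof.
rewrite /target; apply: pw_nseq => //.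
  by apply/allP.
have -> : pairwise r (hs :: nseq n lb ++ dl :: nseq n lc) =
  all (r hs) (nseq n lb ++ dl :: nseq n lc) && pairwise r (nseq n lb ++ dl :: nseq n lc) by [].
rewrite all_cat /= !all_nseq /= !orbT /=.
apply: pw_nseq => //; first by rewrite /= all_nseq /= orbT.
have -> : pairwise r (dl :: nseq n lc) = all (r dl) (nseq n lc) && pairwise r (nseq n lc) by [].
rewrite all_nseq orbT /=; rewrite -[nseq n lc]cats0; apply: pw_nseq => //.
Qed.

Lemma single (p x q : seq Sg) : pairwise r (p ++ x ++ x ++ q) ->
  forall s t, s \in x -> t \in x -> s = t.
Proof.
rewrite pairwise_cat => /and3P[_ _]; rewrite pairwise_cat => /and3P[H _ _].
move=> s t Hs Ht; apply: rk_inj; apply/eqP; rewrite eqn_leq.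
have h1 : r s t by apply: (allrelP H s t Hs); rewrite mem_cat Ht.
have h2 : r t s by apply: (allrelP H t s Ht); rewrite mem_cat Hs.
by apply/andP; split.
Qed.

Lemma cnt_target n s : cnt s (target n) =
  (la == s) * n + (hs == s) + (lb == s) * n + (dl == s) + (lc == s) * n.
Proof. rewrite /target !cnt_cat !cnt_cons !cnt_cat !cnt_cons !cnt_nseq; lia. Qed.

Lemma noncf (M : lang Sg) :
  (forall w, M w -> 0 < cnt hs w /\ 0 < cnt dl w) ->
  (forall w, M w -> cnt hs w = 1 -> cnt dl w = 1 -> 0 < cnt la w -> 0 < cnt lc w ->
     exists n, w = target n) ->
  (forall n, 0 < n -> M (target n)) ->
  ~ context_free M.
Proof.
move=> H1 H2 H3 [N [G HG]].
set n := Kc G ^ #|N|.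
have n0 : 0 < n by rewrite expn_gt0.
have /HG /lang_T HT := H3 _ n0.
have Hsz : n < size (target n) by rewrite /target size_cat size_nseq /= size_cat /= !size_nseq; lia.
have [u [x [y [z [v [Ew Hxz T0 T2]]]]]] := pumping HT Hsz.
have /H1 [A0 B0] : M (u ++ y ++ v) by apply/HG/lang_T.
have M2 : M (u ++ x ++ x ++ y ++ z ++ z ++ v) by apply/HG/lang_T.
have Hc s : cnt s (target n) = cnt s u + cnt s x + cnt s y + cnt s z + cnt s v.
  by rewrite Ew !cnt_cat; lia.
have Hc2 s : cnt s (u ++ x ++ x ++ y ++ z ++ z ++ v) = cnt s (target n) + cnt s x + cnt s z.
  by rewrite Hc !cnt_cat; lia.
have Hc0 s : cnt s (u ++ y ++ v) = cnt s u + cnt s y + cnt s v by rewrite !cnt_cat; lia.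
have hx : cnt hs x = 0 /\ cnt hs z = 0.
  by move: (Hc hs) A0; rewrite Hc0 cnt_target /=; lia.
have dx : cnt dl x = 0 /\ cnt dl z = 0.
  by move: (Hc dl) B0; rewrite Hc0 cnt_target /=; lia.
have E1 : cnt hs (u ++ x ++ x ++ y ++ z ++ z ++ v) = 1.
  rewrite Hc2 cnt_target /=; move: hx; by case=> -> ->; rewrite !mul0n.
have E2 : cnt dl (u ++ x ++ x ++ y ++ z ++ z ++ v) = 1.
  by rewrite Hc2 cnt_target /=; case: dx => -> ->; rewrite !mul0n.
have E3 : 0 < cnt la (u ++ x ++ x ++ y ++ z ++ z ++ v).
  by rewrite Hc2 cnt_target /=; move: (cnt la x) (cnt la z) n0 => p q; lia.
have E4 : 0 < cnt lc (u ++ x ++ x ++ y ++ z ++ z ++ v).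
  by rewrite Hc2 cnt_target /=; move: (cnt lc x) (cnt lc z) n0 => p q; lia.
have [k Ek] := H2 _ M2 E1 E2 E3 E4.
have Heq s : cnt s (target k) = cnt s (target n) + cnt s x + cnt s z by rewrite -Ek Hc2.
have Ea := Heq la; have Eb := Heq lb; have Ec := Heq lc.
rewrite !cnt_target /= in Ea Eb Ec.
have Hs := target_sorted k; rewrite -Ek in Hs.
have Sx := single Hs.
have Sz : forall s t, s \in z -> t \in z -> s = t.
  apply: (@single (u ++ x ++ x ++ y) z v); rewrite -!catA; exact: Hs.
have [s Hsin] : exists s, s \in x ++ z.
  case E: (x ++ z) => [|h t]; first by case: (Hxz E).
  by exists h; rewrite inE eqxx.
have pos s0 : s0 \in x ++ z -> 0 < cnt s0 x + cnt s0 z.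
  by rewrite -cnt_cat /cnt -has_count has_pred1.
have Hpos := pos _ Hsin.
have all3 : [/\ la \in x ++ z, lb \in x ++ z & lc \in x ++ z].
  have [Hpa Hpb Hpc] : [/\ 0 < cnt la x + cnt la z, 0 < cnt lb x + cnt lb z & 0 < cnt lc x + cnt lc z].
    have ABC : cnt la x + cnt la z = cnt lb x + cnt lb z /\ cnt lb x + cnt lb z = cnt lc x + cnt lc z.
      move: Ea Eb Ec; rewrite ?mul1n ?mul0n.
      move: (cnt la x) (cnt la z) (cnt lb x) (cnt lb z) (cnt lc x) (cnt lc z) => ? ? ? ? ? ?; lia.
    case: ABC => e1 e2.
    case: hx dx => hx1 hx2 [dx1 dx2].
    case: s {Hsin} Hpos => [[[] []]|] Hp; rewrite -?/la -?/lb -?/lc -?/dl -?/hs in Hp;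
    move: Hp e1 e2 hx1 hx2 dx1 dx2;
    move: (cnt la x) (cnt la z) (cnt lb x) (cnt lb z) (cnt lc x) (cnt lc z)
          (cnt hs x) (cnt hs z) (cnt dl x) (cnt dl z) => *; split; lia.
  by split; rewrite -has_pred1 has_count -/(cnt _ _) cnt_cat.
case: all3; rewrite !mem_cat.
case/orP=> [Ha|Ha]; case/orP=> [Hb|Hb]; case/orP=> [Hc'|Hc'].
all: first [ by have := Sx _ _ Ha Hb | by have := Sz _ _ Ha Hb
           | by have := Sx _ _ Ha Hc' | by have := Sz _ _ Ha Hc'
           | by have := Sx _ _ Hb Hc' | by have := Sz _ _ Hb Hc' ].
Qed.

Definition word1 n : seq Sg := nseq n la ++ hs :: nseq n lb ++ [:: dl].
Definition word2 n : seq Sg := hs :: nseq n lb ++ dl :: nseq n lc.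
Definition Lg : lang Sg := fun w => exists n, 0 < n /\ (w = word1 n \/ w = word2 n).

Lemma cnt_w1 n s : cnt s (word1 n) = (la == s) * n + (hs == s) + (lb == s) * n + (dl == s).
Proof. by rewrite /word1 !(cnt_cat, cnt_cons, cnt_nseq, cnt_nil); lia. Qed.

Lemma cnt_w2 n s : cnt s (word2 n) = (hs == s) + (lb == s) * n + (dl == s) + (lc == s) * n.
Proof. by rewrite /word2 !(cnt_cat, cnt_cons, cnt_nseq, cnt_nil); lia. Qed.

Lemma Lcnt w : Lg w -> cnt hs w = 1 /\ cnt dl w = 1.
Proof. by case=> n [_ [->|->]]; rewrite ?cnt_w1 ?cnt_w2 /= !mul0n. Qed.

Lemma split_at (s : Sg) p q p' q' : s \notin p -> s \notin p' ->
  p ++ s :: q = p' ++ s :: q' -> p = p' /\ q = q'.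
Proof.
elim: p p' => [|h p IH] [|h' p'] /=.
- by move=> _ _ [].
- by move=> _; rewrite inE negb_or => /andP[/negP ne _] [E]; case: ne; rewrite E.
- by rewrite inE negb_or => /andP[/negP ne _] _ [E]; case: ne; rewrite E.
- rewrite !inE !negb_or => /andP[_ n1] /andP[_ n2] [-> E].
  by have [-> ->] := IH _ n1 n2 E.
Qed.

Lemma cnt0_notin (s : Sg) p : cnt s p = 0 -> s \notin p.
Proof. by rewrite /cnt -has_pred1 has_count => ->. Qed.

Lemma notin_nseq (s t : Sg) m : s != t -> s \notin nseq m t.
Proof. by rewrite mem_nseq negb_and => ->; rewrite orbT. Qed.

Lemma nil_pref (p q : seq Sg) m s : p ++ q = nseq m s -> cnt s p = 0 -> p = [::].
Proof.
rewrite /cnt => E; have := all_pred1_nseq s m; rewrite -E all_cat => /andP[H _].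
by move: H; rewrite all_count => /eqP -> /eqP; rewrite size_eq0 => /eqP.
Qed.

Lemma nil_suf (p q : seq Sg) m s : q ++ p = nseq m s -> cnt s p = 0 -> p = [::].
Proof.
rewrite /cnt => E; have := all_pred1_nseq s m; rewrite -E all_cat => /andP[_ H].
by move: H; rewrite all_count => /eqP -> /eqP; rewrite size_eq0 => /eqP.
Qed.

Lemma mem_split (s : Sg) w : cnt s w = 1 -> exists p q, [/\ w = p ++ s :: q, cnt s p = 0 & cnt s q = 0].
Proof.
rewrite /cnt => H; have Hin : s \in w by rewrite -has_pred1 has_count H.
move: H; case/splitPr: Hin => p q H; exists p, q; split => //; move: H; rewrite -/(cnt _ _) cnt_cat cnt_cons eqxx /cnt; lia.
Qed.

Lemma w1_head m (h : Sg) t : 0 < m -> h :: t = word1 m -> h = la.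
Proof. by case: m => // m _ [->]. Qed.

Lemma w2_head m (h : Sg) t : h :: t = word2 m -> h = hs.
Proof. by case. Qed.

Lemma pgi_H2 w : pgi Lg Lg w -> cnt hs w = 1 -> cnt dl w = 1 -> 0 < cnt la w -> 0 < cnt lc w ->
  exists n, w = target n.
Proof.
move=> [x [y [Lx Ly [x1 [y1 [x2 [y2 [Ex Ey ne Ew]]]]]]]] C1 C2 Ca Cc.
have [Hy1 Hy2] := Lcnt Ly; have [Hx1 Hx2] := Lcnt Lx.
subst w.
have cx s : cnt s x = cnt s x1 + cnt s y1 + cnt s x2 by rewrite Ex !cnt_cat; lia.
have cy s : cnt s y = cnt s y1 + cnt s y2 by rewrite Ey !cnt_cat.
rewrite !cnt_cat in C1 C2 Ca Cc.
case: Ly => [m [m0 [Ey1|Ey1]]].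
  have a1 : 0 < cnt la y1.
    case E1: y1 ne => [//|h t] _.
    have Eh : h = la by apply: (@w1_head m h (t ++ y2)) => //; rewrite -Ey1 Ey E1.
    by rewrite Eh cnt_cons eqxx.
  case: Lx => [n [n0 [Ex1|Ex1]]].
    have := cx lc; have := cy lc; rewrite Ex1 Ey1 !cnt_w1 /= !mul0n; lia.
  have := cx la; rewrite Ex1 cnt_w2 /= !mul0n; lia.
have ya := cy la; rewrite Ey1 cnt_w2 /= !mul0n in ya.
case: Lx => [n [n0 [Ex1|Ex1]]]; last first.
  have := cx la; rewrite Ex1 cnt_w2 /= !mul0n; lia.
have yc := cx lc; rewrite Ex1 cnt_w1 /= !mul0n in yc.
have dx := cx dl; have dy := cy dl; have hx := cx hs; have hy := cy hs.
have [p [q [Ey1' p0 q0]]] : exists p q, [/\ y1 = p ++ dl :: q, cnt dl p = 0 & cnt dl q = 0].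
  apply: mem_split; lia.
move: Ey; rewrite Ey1 Ey1' /word2 -catA /= -cat1s catA cat1s => Ey.
have nd : dl \notin hs :: nseq m lb by rewrite inE negb_or notin_nseq.
have [Ep Eq] := split_at (cnt0_notin p0) nd (esym Ey).
subst p.
have q00 : q = [::].
  apply: (nil_pref Eq); move: yc; rewrite Ey1' !(cnt_cat, cnt_cons) /=; lia.
subst q; move: Eq => /= Ey2; subst y2.
move: Ex; rewrite Ey1' Ex1 /word1 /= => Ex.
have hx1 : cnt hs x1 = 0 by lia.
have [Ex1' Ex2] := split_at (cnt0_notin hx1) (@notin_nseq hs la n isT) (esym Ex).
rewrite -catA /= in Ex2.
have [Eb Ex2'] := split_at (@notin_nseq dl lb m isT) (@notin_nseq dl lb n isT) Ex2.
have Emn : m = n by have := congr1 size Eb; rewrite !size_nseq.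
subst; exists n; rewrite /target /= -!catA /=.
by rewrite cats0.
Qed.

Lemma sgi_H2 w : sgi Lg Lg w -> cnt hs w = 1 -> cnt dl w = 1 -> 0 < cnt la w -> 0 < cnt lc w ->
  exists n, w = target n.
Proof.
move=> [x [y [Lx Ly [x1 [y1 [x2 [y2 [Ex Ey ne Ew]]]]]]]] C1 C2 Ca Cc.
have [Hy1 Hy2] := Lcnt Ly; have [Hx1 Hx2] := Lcnt Lx.
subst w.
have cx s : cnt s x = cnt s x1 + cnt s y2 + cnt s x2 by rewrite Ex !cnt_cat; lia.
have cy s : cnt s y = cnt s y1 + cnt s y2 by rewrite Ey !cnt_cat.
rewrite !cnt_cat in C1 C2 Ca Cc.
have hx := cx hs; have hy := cy hs; have dx := cx dl; have dy := cy dl.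
case: Ly => [m [m0 [Ey1|Ey1]]]; last first.
  have y10 : y1 = [::].
    case E1: y1 => [//|h t].
    have Eh : h = hs by apply: (@w2_head m h (t ++ y2)); rewrite -Ey1 Ey E1.
    by move: hy C1; rewrite E1 !cnt_cons Eh eqxx; lia.
  subst y1.
  case: Lx => [n [n0 [Ex1|Ex1]]].
    have := cx lc; rewrite Ex1 cnt_w1 /= !mul0n cnt_nil in Cc *; lia.
  have := cx la; rewrite Ex1 cnt_w2 /= !mul0n cnt_nil in Ca *; lia.
have yc := cy lc; rewrite Ey1 cnt_w1 /= !mul0n in yc.
case: Lx => [n [n0 [Ex1|Ex1]]].
  have := cx lc; rewrite Ex1 cnt_w1 /= !mul0n; lia.
have xa := cx la; rewrite Ex1 cnt_w2 /= !mul0n in xa.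
have [p [q [Ey2 p0 q0]]] : exists p q, [/\ y2 = p ++ hs :: q, cnt hs p = 0 & cnt hs q = 0].
  apply: mem_split; lia.
have np : hs \notin y1 ++ p by apply: cnt0_notin; rewrite cnt_cat; lia.
move: Ey; rewrite Ey1 Ey2 /word1 catA => Ey.
have [Ea Eq] := split_at (@notin_nseq hs la m isT) np Ey.
have p00 : p = [::].
  apply: (nil_suf (esym Ea)); move: xa; rewrite Ey2 !cnt_cat; lia.
subst p; rewrite cats0 in Ea; subst y1 q.
move: Ex; rewrite Ex1 Ey2 /word2 /= => Ex.
have hx1 : cnt hs x1 = 0 by lia.
have [Ex1' Ex2] := split_at (s := hs) (p := [::]) (cnt0_notin (cnt_nil hs)) (cnt0_notin hx1) Ex.
rewrite -catA /= in Ex2.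
have [Eb Ex2'] := split_at (@notin_nseq dl lb n isT) (@notin_nseq dl lb m isT) Ex2.
have Emn : m = n by have := congr1 size Eb; rewrite !size_nseq.
subst; exists n; rewrite /target /= -!catA /=.
by [].
Qed.

Definition NX : option bool := Some true.
Definition NY : option bool := Some false.

Definition G0 : cfg Sg (option bool) :=
  CFG None [:: (None, [:: inl NX; inr dl]);
               (NX, [:: inr la; inl NX; inr lb]);
               (NX, [:: inr la; inr hs; inr lb]);
               (None, [:: inr hs; inl NY]);
               (NY, [:: inr lb; inl NY; inr lc]);
               (NY, [:: inr lb; inr dl; inr lc])].

Lemma Tinv (A : option bool) w : T G0 (inl A) w ->
  exists alpha, (A, alpha) \in cfg_rules G0 /\ Ts G0 alpha w.
Proof. by move=> H; inversion H; subst; exists alpha. Qed.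

Lemma Tsinv_nil w : Ts G0 [::] w -> w = [::].
Proof. by move=> H; inversion H. Qed.

Lemma Tsinv_cons x s w : Ts G0 (x :: s) w ->
  exists w1 w2, [/\ w = w1 ++ w2, T G0 x w1 & Ts G0 s w2].
Proof. by move=> H; inversion H; subst; exists w1, w2. Qed.

Lemma Ts2 x1 x2 w : Ts G0 [:: x1; x2] w ->
  exists w1 w2, [/\ w = w1 ++ w2, T G0 x1 w1 & T G0 x2 w2].
Proof.
move/Tsinv_cons=> [u1 [u2 [-> H1 /Tsinv_cons [v1 [v2 [-> H2 /Tsinv_nil ->]]]]]].
by exists u1, v1; rewrite cats0.
Qed.

Lemma Ts3 x1 x2 x3 w : Ts G0 [:: x1; x2; x3] w ->
  exists w1 w2 w3, [/\ w = w1 ++ w2 ++ w3, T G0 x1 w1, T G0 x2 w2 & T G0 x3 w3].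
Proof.
move/Tsinv_cons=> [u1 [u2 [-> H1 /Ts2 [v1 [v2 [-> H2 H3]]]]]].
by exists u1, v1, v2.
Qed.

Lemma nseqSr (T0 : Type) n (s : T0) : nseq n.+1 s = nseq n s ++ [:: s].
Proof. by elim: n => //= n ->. Qed.

Lemma TX k w : size w < k -> T G0 (inl NX) w -> exists n, 0 < n /\ w = nseq n la ++ hs :: nseq n lb.
Proof.
elim: k w => // k IH w Hs /Tinv [alpha [Hr Hts]].
move: Hr Hts; rewrite !inE.
case/orP=> [/eqP[]//|]; case/orP=> [/eqP[->]|]; last case/orP=> [/eqP[->]|]; last first.
- by case/orP=> [/eqP[]//|]; case/orP=> [/eqP[]//|/eqP[]//].
- move=> /Ts3 [w1 [w2 [w3 [-> /T_inr -> /T_inr -> /T_inr ->]]]].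
  by exists 1.
- move=> /Ts3 [w1 [w2 [w3 [Ew /T_inr E1 H2 /T_inr E3]]]]; subst.
  have Hs' : size w2 < k by move: Hs; rewrite !size_cat /=; lia.
  have [n [n0 ->]] := IH w2 Hs' H2.
  exists n.+1; split => //; by rewrite [nseq n.+1 lb]nseqSr /= -!catA.
Qed.

Lemma TY k w : size w < k -> T G0 (inl NY) w -> exists n, 0 < n /\ w = nseq n lb ++ dl :: nseq n lc.
Proof.
elim: k w => // k IH w Hs /Tinv [alpha [Hr Hts]].
move: Hr Hts; rewrite !inE.
case/orP=> [/eqP[]//|]; case/orP=> [/eqP[]//|]; case/orP=> [/eqP[]//|]; case/orP=> [/eqP[]//|].
case/orP=> [/eqP[->]|/eqP[->]].
- move=> /Ts3 [w1 [w2 [w3 [Ew /T_inr E1 H2 /T_inr E3]]]]; subst.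
  have Hs' : size w2 < k by move: Hs; rewrite !size_cat /=; lia.
  have [n [n0 ->]] := IH w2 Hs' H2.
  exists n.+1; split => //; by rewrite [nseq n.+1 lc]nseqSr /= -!catA.
- move=> /Ts3 [w1 [w2 [w3 [-> /T_inr -> /T_inr -> /T_inr ->]]]].
  by exists 1.
Qed.

Lemma TS w : T G0 (inl None) w -> Lg w.
Proof.
move/Tinv=> [alpha []]; rewrite !inE.
case/orP=> [/eqP[->]|]; last (case/orP=> [/eqP[]//|]; case/orP=> [/eqP[]//|];
  case/orP=> [/eqP[->]|]; last by case/orP=> [/eqP[]//|/eqP[]//]).
  move=> /Ts2 [w1 [w2 [-> H1 /T_inr ->]]].
  have [n [n0 ->]] := TX (ltnSn _) H1.
  by exists n; split => //; left; rewrite /word1 -catA.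
move=> /Ts2 [w1 [w2 [-> /T_inr -> H2]]].
have [n [n0 ->]] := TY (ltnSn _) H2.
by exists n; split => //; right.
Qed.

Lemma mkX n : 0 < n -> T G0 (inl NX) (nseq n la ++ hs :: nseq n lb).
Proof.
elim: n => // [[|n]] IH _.
  apply: (@Tnode _ _ G0 NX [:: inr la; inr hs; inr lb]) => //.
  exact: (Ts_map G0 [:: la; hs; lb]).
apply: (@Tnode _ _ G0 NX [:: inr la; inl NX; inr lb]) => //.
have := Tscons (Tleaf G0 la) (Tscons (IH isT) (Tscons (Tleaf G0 lb) (Tsnil G0))).
by rewrite [nseq n.+2 lb]nseqSr /= -!catA.
Qed.

Lemma mkY n : 0 < n -> T G0 (inl NY) (nseq n lb ++ dl :: nseq n lc).
Proof.
elim: n => // [[|n]] IH _.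
  apply: (@Tnode _ _ G0 NY [:: inr lb; inr dl; inr lc]) => //.
  exact: (Ts_map G0 [:: lb; dl; lc]).
apply: (@Tnode _ _ G0 NY [:: inr lb; inl NY; inr lc]) => //.
have := Tscons (Tleaf G0 lb) (Tscons (IH isT) (Tscons (Tleaf G0 lc) (Tsnil G0))).
by rewrite [nseq n.+2 lc]nseqSr /= -!catA.
Qed.

Lemma Lg_cf : context_free Lg.
Proof.
exists _, G0 => w; rewrite lang_T; split; last exact: TS.
case=> n [n0 [->|->]].
  apply: (@Tnode _ _ G0 None [:: inl NX; inr dl]) => //.
  have := Tscons (mkX n0) (Tscons (Tleaf G0 dl) (Tsnil G0)).
  by rewrite /word1 -catA.
apply: (@Tnode _ _ G0 None [:: inr hs; inl NY]) => //.
by have := Tscons (Tleaf G0 hs) (Tscons (mkY n0) (Tsnil G0)); rewrite cats0.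
Qed.

Lemma pgi_H1 w : pgi Lg Lg w -> 0 < cnt hs w /\ 0 < cnt dl w.
Proof.
move=> [x [y [_ Ly [x1 [y1 [x2 [y2 [_ Ey _ ->]]]]]]]].
have [h d] := Lcnt Ly; move: h d; rewrite Ey !cnt_cat; lia.
Qed.

Lemma sgi_H1 w : sgi Lg Lg w -> 0 < cnt hs w /\ 0 < cnt dl w.
Proof.
move=> [x [y [_ Ly [x1 [y1 [x2 [y2 [_ Ey _ ->]]]]]]]].
have [h d] := Lcnt Ly; move: h d; rewrite Ey !cnt_cat; lia.
Qed.

Lemma pgi_H3 n : 0 < n -> pgi Lg Lg (target n).
Proof.
move=> n0; exists (word1 n), (word2 n); split.
- by exists n; split => //; left.
- by exists n; split => //; right.
- exists (nseq n la), (hs :: nseq n lb ++ [:: dl]), [::], (nseq n lc); split => //.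
  + by rewrite /word1 cats0.
  + by rewrite /word2 /= -catA.
  + by rewrite /target cats0 /= -catA.
Qed.

Lemma sgi_H3 n : 0 < n -> sgi Lg Lg (target n).
Proof.
move=> n0; exists (word2 n), (word1 n); split.
- by exists n; split => //; right.
- by exists n; split => //; left.
- exists [::], (nseq n la), (nseq n lc), (hs :: nseq n lb ++ [:: dl]); split => //.
  + by rewrite /word2 /= -catA.
  + by rewrite /target /= -catA.
Qed.

Theorem corollary5p2 :
  exists (Sigma : finType) (L1 L2 : lang Sigma),
    [/\ context_free L1, context_free L2,
        ~ context_free (pgi L1 L1) & ~ context_free (sgi L2 L2)].
Proof.
exists _, Lg, Lg; split.
- exact: Lg_cf.
- exact: Lg_cf.
- apply: noncf; [exact: pgi_H1 | exact: pgi_H2 | exact: pgi_H3].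
- apply: noncf; [exact: sgi_H1 | exact: sgi_H2 | exact: sgi_H3].
Qed.
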